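(* Let $\boldsymbol\beta$ be ERGM parameters, $m_n\to\infty$ with $\binom{m_n}{2}=o(\log n)$, and let $\mathcal{G}_{n,1},\dots,\mathcal{G}_{n,n}$ be i.i.d. from $\mathbb{P}_{\boldsymbol\beta}$ on $m_n$ vertices. For a graph $G$ on $m_n$ vertices let $p_{\boldsymbol\beta}(G)=\mathbb{P}_{\boldsymbol\beta}(G)$ and $X_{i,G}=\mathbf{1}(\mathcal{G}_{n,i}=G)/p_{\boldsymbol\beta}(G)$. Then for every $\epsilon>0$, \[\mathbb{P}\Big(\sup_{G}\Big|\frac1n\sum_{i=1}^nX_{i,G}-1\Big|>\frac{\epsilon}{m_n}\Big)\to0,\] the supremum being over all simple graphs $G$ on vertex set $\{1,\dots,m_n\}$.
   Context: ERGM: $\mathbb{P}_{\boldsymbol\beta}(G)=Z_N(\boldsymbol\beta)^{-1}\exp\{N^2\sum_{k=1}^K\beta_kt(T_k,G)\}$ on simple graphs with vertex set $\{1,\dots,N\}$, where $T_1$ is a single edge, $T_2,\dots,T_K$ are fixed graphs with at least two edges, $\boldsymbol\beta\in\mathbb{R}^K$, and $t(T,G)=\mathrm{hom}(T,G)/N^{v(T)}$ with $\mathrm{hom}$ counting edge-preserving maps $V(T)\to V(G)$. *)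

(* Defs.v *)
From HB Require Import structures.
From mathcomp Require Import all_boot all_order all_algebra.
From mathcomp Require Import all_classical all_reals all_analysis.
Set Implicit Arguments. Unset Strict Implicit. Unset Printing Implicit Defensive.
Import Order.TTheory GRing.Theory Num.Theory.
Local Open Scope ring_scope.

Definition sgraph (N : nat) :=
  {E : {set {set 'I_N}} | [forall e in E, #|e| == 2%N]}.
HB.instance Definition _ N := Finite.copy (sgraph N)
  {E : {set {set 'I_N}} | [forall e in E, #|e| == 2%N]}.

Definition edges N (G : sgraph N) : {set {set 'I_N}} := val G.

(* adjacency: {u,v} is an edge (automatically u != v) *)
Definition adj N (G : sgraph N) (u v : 'I_N) : bool := [set u; v] \in edges G.

Definition hom k N (T : sgraph k) (G : sgraph N) : nat :=
  #|[set f : {ffun 'I_k -> 'I_N} |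
      [forall a, forall b, adj T a b ==> adj G (f a) (f b)]]|.

Definition tdens (R : realType) k N (T : sgraph k) (G : sgraph N) : R :=
  (hom T G)%:R / (N%:R ^+ k).

Definition ergmH (R : realType) (K : nat) (v : 'I_K -> nat)
  (T : forall k : 'I_K, sgraph (v k)) (beta : 'I_K -> R) N (G : sgraph N) : R :=
  N%:R ^+ 2 * \sum_(k < K) beta k * tdens R (T k) G.

Definition ergmZ (R : realType) (K : nat) (v : 'I_K -> nat)
  (T : forall k : 'I_K, sgraph (v k)) (beta : 'I_K -> R) N : R :=
  \sum_(G : sgraph N) expR (ergmH T beta G).

Definition ergmP (R : realType) (K : nat) (v : 'I_K -> nat)
  (T : forall k : 'I_K, sgraph (v k)) (beta : 'I_K -> R) N (G : sgraph N) : R :=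
  expR (ergmH T beta G) / ergmZ T beta N.

Definition iidProb (R : realType) (S : finType) (p : S -> R) (n : nat)
  (A : pred {ffun 'I_n -> S}) : R :=
  \sum_(s : {ffun 'I_n -> S} | A s) \prod_(i < n) p (s i).

(* Main.v *)
Require Import Defs.
From HB Require Import structures.
From mathcomp Require Import all_boot all_order all_algebra.
From mathcomp Require Import all_classical all_reals all_analysis.
From mathcomp Require Import ring lra zify.
Import Order.TTheory GRing.Theory Num.Theory.
Local Open Scope classical_set_scope.
Local Open Scope ring_scope.

Section Prob.
Variables (R : realType) (S : finType).

Lemma prod_fact n (f : 'I_n -> S -> R) :
  \sum_(s : {ffun 'I_n -> S}) \prod_i f i (s i) = \prod_i \sum_x f i x.
Proof. by rewrite bigA_distr_bigA. Qed.

Lemma prod_if1 n (i : 'I_n) (g : 'I_n -> R) :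
  \prod_k (if k == i then g k else 1) = g i.
Proof. by rewrite -big_mkcond big_pred1_eq. Qed.

Lemma moment2 (p a : S -> R) n : \sum_x p x = 1 -> \sum_x p x * a x = 0 ->
  \sum_(s : {ffun 'I_n -> S}) (\prod_i p (s i)) * (\sum_i a (s i)) ^+ 2
  = n%:R * \sum_x p x * a x ^+ 2.
Proof.
move=> p1 pa0.
have E : forall s : {ffun 'I_n -> S}, (\prod_i p (s i)) * (\sum_i a (s i)) ^+ 2 =
   \sum_i \sum_j \prod_k (p (s k) * (if k == i then a (s k) else 1)
                                  * (if k == j then a (s k) else 1)).
  move=> s; rewrite expr2 mulr_suml mulr_sumr; apply: eq_bigr => i _.
  rewrite mulr_sumr mulr_sumr; apply: eq_bigr => j _.
  by rewrite !big_split /= !prod_if1 mulrA.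
rewrite (eq_bigr _ (fun s _ => E s)) exchange_big /=.
under eq_bigr => i _ do rewrite exchange_big /=.
rewrite -[in RHS](card_ord n) -sumr_const mulr_suml.
apply: eq_bigr => i _; rewrite mul1r.
rewrite (bigD1 i) //= [X in _ + X]big1 ?addr0.
  transitivity (\prod_k \sum_x (p x * (if k == i then a x else 1) * (if k == i then a x else 1))).
    exact: (@prod_fact n (fun k x => p x * (if k == i then a x else 1) * (if k == i then a x else 1))).
  rewrite (bigD1 i) //= [X in _ * X]big1 ?mulr1.
    by apply: eq_bigr => x _; rewrite eqxx expr2 mulrA.
  by move=> k /negbTE ->; rewrite -[RHS]p1; apply: eq_bigr => x _; rewrite /= !mulr1.
move=> j ji.
transitivity (\prod_k \sum_x (p x * (if k == i then a x else 1) * (if k == j then a x else 1))).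
  exact: (@prod_fact n (fun k x => p x * (if k == i then a x else 1) * (if k == j then a x else 1))).
rewrite (bigD1 i) //=.
have -> : \sum_x p x * (if i == i then a x else 1) * (if i == j then a x else 1) = 0.
  rewrite -[RHS]pa0; apply: eq_bigr => x _.
  by rewrite eqxx eq_sym (negbTE ji) mulr1.
by rewrite mul0r.
Qed.

Lemma union_bound (S' : finType) n (p : S -> R) (P : S' -> pred {ffun 'I_n -> S}) :
  (forall x, 0 <= p x) ->
  \sum_(s : {ffun 'I_n -> S} | [exists G, P G s]) \prod_(i < n) p (s i)
  <= \sum_G \sum_(s : {ffun 'I_n -> S} | P G s) \prod_(i < n) p (s i).
Proof.
move=> p0.
have w0 : forall s : {ffun 'I_n -> S}, 0 <= \prod_(i < n) p (s i).
  by move=> s; apply: prodr_ge0.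
rewrite (eq_bigr (fun G => \sum_s (if P G s then \prod_(i < n) p (s i) else 0)));
  last by move=> G _; rewrite big_mkcond.
rewrite exchange_big /= big_mkcond /=; apply: ler_sum => s _.
case: existsP => [[G0 HG0]|_]; last by apply: sumr_ge0 => G _; case: ifP.
rewrite (bigD1 G0) //= HG0 lerDl; apply: sumr_ge0 => G _; case: ifP => //.
Qed.

Lemma cheb (p : S -> R) (G : S) n (d : R) :
  (forall x, 0 <= p x) -> \sum_x p x = 1 -> 0 < p G -> 0 < d -> (0 < n)%N ->
  \sum_(s : {ffun 'I_n -> S} |
     d < `| n%:R^-1 * \sum_(i < n) ((s i == G)%:R / p G) - 1 |) \prod_(i < n) p (s i)
  <= (n%:R * d ^+ 2 * p G)^-1.
Proof.
move=> p0 p1 pG d0 n0.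
pose a x := (x == G)%:R / p G - 1.
have nR : 0 < (n%:R : R) by rewrite ltr0n.
have EY : forall s : {ffun 'I_n -> S},
   n%:R^-1 * \sum_(i < n) ((s i == G)%:R / p G) - 1 = n%:R^-1 * \sum_i a (s i).
  move=> s; rewrite /a sumrB sumr_const card_ord mulrBr.
  by rewrite -[_ *+ n]mulr_natl mulr1 mulVf // gt_eqF.
have w0 : forall s : {ffun 'I_n -> S}, 0 <= \prod_(i < n) p (s i).
  by move=> s; apply: prodr_ge0.
have pd : p G != 0 by rewrite gt_eqF.
have sD : forall h : S -> R, \sum_x p x * h x = p G * h G + \sum_(x | x != G) p x * h x.
  by move=> h; rewrite (bigD1 G).
have p1' : \sum_(x | x != G) p x = 1 - p G.
  by apply/eqP; rewrite eq_sym subr_eq -p1 (bigD1 G) //= addrC.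
have pa0 : \sum_x p x * a x = 0.
  rewrite sD (eq_bigr (fun x => - p x)); last first.
    by move=> x /negbTE xG; rewrite /a xG mul0r sub0r mulrN1.
  rewrite sumrN p1' /a eqxx mul1r; by field.
have pa2 : \sum_x p x * a x ^+ 2 = (p G)^-1 - 1.
  rewrite sD (eq_bigr (fun x => p x)); last first.
    by move=> x /negbTE xG; rewrite /a xG mul0r sub0r sqrrN expr1n mulr1.
  rewrite p1' /a eqxx mul1r; by field.
have M := @moment2 p a n p1 pa0.
apply: (@le_trans _ _ (\sum_(s : {ffun 'I_n -> S}) \prod_(i < n) p (s i) *
   ((n%:R^-1 * \sum_i a (s i)) ^+ 2 / d ^+ 2))).
  rewrite [X in _ <= X](bigID (fun s : {ffun 'I_n -> S} =>
     d < `| n%:R^-1 * \sum_(i < n) ((s i == G)%:R / p G) - 1 |)) /=.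
  rewrite -[X in X <= _]addr0; apply: lerD; last first.
    apply: sumr_ge0 => s _; apply: mulr_ge0 => //; apply: divr_ge0.
      exact: sqr_ge0.
    exact: sqr_ge0.
  apply: ler_sum => s; rewrite EY => Hs.
  rewrite -[X in X <= _]mulr1; apply: ler_wpM2l => //.
  rewrite ler_pdivlMr ?exprn_gt0 // mul1r.
  rewrite -(real_normK (num_real (n%:R^-1 * \sum_i a (s i)))).
  by rewrite lerXn2r ?nnegrE ?normr_ge0 ?ltW.
have -> : \sum_(s : {ffun 'I_n -> S}) \prod_(i < n) p (s i) *
   ((n%:R^-1 * \sum_i a (s i)) ^+ 2 / d ^+ 2) = (n%:R^-1 ^+ 2 / d ^+ 2) *
   \sum_(s : {ffun 'I_n -> S}) (\prod_(i < n) p (s i)) * (\sum_i a (s i)) ^+ 2.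
  by rewrite mulr_sumr; apply: eq_bigr => s _; rewrite exprMn; ring.
rewrite M pa2.
have d2 : 0 < d ^+ 2 by rewrite exprn_gt0.
have -> : (n%:R * d ^+ 2 * p G)^-1 = n%:R * (n%:R^-1 ^+ 2 / d ^+ 2) * (p G)^-1.
  field; rewrite !gt_eqF //.
set c := n%:R^-1 ^+ 2 / d ^+ 2.
have -> : c * (n%:R * ((p G)^-1 - 1)) = (n%:R * c) * ((p G)^-1 - 1) by ring.
apply: ler_wpM2l.
  by apply: mulr_ge0; [exact: ler0n | apply: divr_ge0; [exact: sqr_ge0|exact: ltW]].
by rewrite gerBl.
Qed.

End Prob.

Lemma card_sgraph N : (#|{: sgraph N}| <= 2 ^ 'C(N, 2))%N.
Proof.
have -> : #|{: sgraph N}| = #|[pred E : {set {set 'I_N}} | [forall e in E, #|e| == 2%N]]|.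
  exact: card_sig.
rewrite -[N in 'C(N, _)]card_ord -card_draws -card_powerset.
apply: subset_leq_card. apply/fintype.subsetP => E; rewrite inE /= powersetE => /forallP HE.
apply/fintype.subsetP => e eE; rewrite inE; exact: (implyP (HE e) eE).
Qed.

Section G.
Variables (R : realType) (K : nat) (v : 'I_K -> nat)
  (T : forall k : 'I_K, sgraph (v k)) (beta : 'I_K -> R).

Lemma tdens01 k N (Tk : sgraph k) (G : sgraph N) : 0 <= tdens R Tk G <= 1.
Proof.
rewrite /tdens; apply/andP; split.
  by apply: divr_ge0; [exact: ler0n | apply: exprn_ge0; exact: ler0n].
have hk : (Defs.hom Tk G <= N ^ k)%N.
  rewrite /Defs.hom; apply: leq_trans (max_card _) _.
  by rewrite card_ffun !card_ord.
have [->|nz] := eqVneq (N%:R ^+ k : R) 0; first by rewrite invr0 mulr0.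
have pos : 0 < (N%:R ^+ k : R) by rewrite lt0r nz /= exprn_ge0 // ler0n.
by rewrite ler_pdivrMr // mul1r -natrX ler_nat.
Qed.

Definition Bd := \sum_k `|beta k|.

Lemma Bd_ge0 : 0 <= Bd.
Proof. by apply: sumr_ge0 => k _; exact: normr_ge0. Qed.

Lemma Hbound N (G : sgraph N) : `|ergmH T beta G| <= N%:R ^+ 2 * Bd.
Proof.
rewrite /ergmH normrM ger0_norm ?exprn_ge0 ?ler0n //.
apply: ler_wpM2l; first by rewrite exprn_ge0 ?ler0n.
apply: le_trans (ler_norm_sum _ _ _) _.
apply: ler_sum => k _; rewrite normrM.
have /andP[t0 t1] := @tdens01 (v k) N (T k) G.
rewrite (ger0_norm t0) -[X in _ <= X]mulr1.
by apply: ler_wpM2l => //; exact: normr_ge0.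
Qed.

Lemma Z_gt0 N (G : sgraph N) : 0 < ergmZ T beta N.
Proof.
rewrite /ergmZ (bigD1 G) //=; apply: (@lt_le_trans _ _ (expR (ergmH T beta G))).
  exact: expR_gt0.
by rewrite lerDl; apply: sumr_ge0 => H _; exact: expR_ge0.
Qed.

Lemma P_gt0 N (G : sgraph N) : 0 < ergmP T beta G.
Proof. by rewrite /ergmP divr_gt0 // ?expR_gt0 // (@Z_gt0 N G). Qed.

Lemma P_ge0 N (G : sgraph N) : 0 <= ergmP T beta G.
Proof. exact/ltW/P_gt0. Qed.

Lemma P_sum1 N (G0 : sgraph N) : \sum_(G : sgraph N) ergmP T beta G = 1.
Proof.
by rewrite /ergmP -mulr_suml divff // gt_eqF // (@Z_gt0 N G0).
Qed.

Lemma P_inv N (G : sgraph N) :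
  (ergmP T beta G)^-1 <= #|{: sgraph N}|%:R * expR (2 * (N%:R ^+ 2 * Bd)).
Proof.
have Z0 := @Z_gt0 N G.
rewrite /ergmP invf_div.
have hB := @Hbound N G.
have HZ : ergmZ T beta N <= #|{: sgraph N}|%:R * expR (N%:R ^+ 2 * Bd).
  rewrite /ergmZ; apply: (@le_trans _ _ (\sum_(H : sgraph N) expR (N%:R ^+ 2 * Bd))).
    apply: ler_sum => H _.
    rewrite ler_expR; exact: le_trans (ler_norm _) (@Hbound N H).
  by rewrite sumr_const mulr_natl.
have -> : 2 * (N%:R ^+ 2 * Bd) = N%:R ^+ 2 * Bd + N%:R ^+ 2 * Bd by ring.
rewrite expRD mulrA -expRN.
apply: ler_pM => //.
- exact: ltW.
rewrite ler_expR; apply: le_trans _ hB.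
by rewrite -normrN ler_norm.
Qed.
End G.

Arguments Bd {R K}.
Arguments Bd_ge0 {R K}.
Arguments P_ge0 {R K v} T beta {N} G.
Arguments P_gt0 {R K v} T beta {N} G.
Arguments P_sum1 {R K v} T beta {N} G0.
Arguments P_inv {R K v} T beta {N} G.
Arguments cheb {R S p G n d}.
Arguments union_bound {R S S'} n p P.

Lemma bin2_twice N : (2 * 'C(N, 2) = N * N.-1)%N.
Proof.
elim: N => [//|N IH]; rewrite binS bin1 mulnDr IH.
case: N {IH} => [//|N] /=; lia.
Qed.

Lemma sq_le_bin N : (2 <= N)%N -> (N * N <= 4 * 'C(N, 2))%N.
Proof.
move=> h; have := bin2_twice N; case: N h => [//|N] /= h E; lia.
Qed.

Lemma key (R : realType) (K : nat) (v : 'I_K -> nat)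
  (T : forall k : 'I_K, sgraph (v k)) (beta : 'I_K -> R) n N (eps : R) :
  0 < eps -> (2 <= N)%N -> (0 < n)%N ->
  iidProb (ergmP T beta (N := N)) (n := n)
       (fun s : {ffun 'I_n -> sgraph N} =>
          [exists G : sgraph N,
             eps / N%:R <
             `| n%:R^-1 * \sum_(i < n) ((s i == G)%:R / ergmP T beta G) - 1 |])
  <= expR ((6 + 8 * Bd beta) * 'C(N, 2)%:R) / (n%:R * eps ^+ 2).
Proof.
move=> e0 N2 n0.
set p := ergmP T beta (N := N).
set S := #|{: sgraph N}|.
set a := N%:R ^+ 2 * Bd beta.
have B0 := Bd_ge0 beta.
have NR : 0 < (N%:R : R) by rewrite ltr0n; apply: leq_trans N2.
have d0 : 0 < eps / N%:R by apply: divr_gt0.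
have G0 : sgraph N.
  by exists finset.set0; apply/forallP => e; rewrite finset.in_set0.
rewrite /iidProb.
apply: le_trans (union_bound n p (fun (G : sgraph N) (s : {ffun 'I_n -> sgraph N}) =>
   eps / N%:R < `| n%:R^-1 * \sum_(i < n) ((s i == G)%:R / p G) - 1 |) (P_ge0 T beta)) _.
apply: (@le_trans _ _ (\sum_(G : sgraph N) (n%:R * (eps / N%:R) ^+ 2 * p G)^-1)).
  apply: ler_sum => G _.
  exact: (cheb (P_ge0 T beta (N:=N)) (P_sum1 T beta G0) (P_gt0 T beta G) d0 n0).
have nR : 0 < (n%:R : R) by rewrite ltr0n.
have q0 : 0 < n%:R * (eps / N%:R) ^+ 2 by rewrite mulr_gt0 // exprn_gt0.
apply: (@le_trans _ _ (\sum_(G : sgraph N) (n%:R * (eps / N%:R) ^+ 2)^-1 * (S%:R * expR (2 * a)))).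
  apply: ler_sum => G _; rewrite invfM; apply: ler_wpM2l.
    by rewrite invr_ge0 ltW.
  exact: P_inv.
rewrite sumr_const -[X in X <= _]mulr_natl (_ : #|_| = S) //.
set C := 'C(N, 2).
have hS : (S%:R : R) <= expR C%:R.
  apply: (@le_trans _ _ (2%:R ^+ C)).
    by rewrite -natrX ler_nat card_sgraph.
  rewrite -[C%:R]mulr1 expRM_natl; apply: lerXn2r; rewrite ?nnegrE ?ler0n ?expR_ge0 //.
  by have := expR_ge1Dx (1 : R); rewrite (_ : (1 + 1 : R) = 2%:R) //.
have hN : (N%:R : R) ^+ 2 <= 4 * C%:R.
  rewrite expr2 -natrM; apply: (@le_trans _ _ (4 * C)%:R); last by rewrite natrM.
  by rewrite ler_nat sq_le_bin.
have hN' : (N%:R : R) ^+ 2 <= expR (4 * C%:R).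
  apply: le_trans hN _; apply: le_trans (expR_ge1Dx _); rewrite lerDr //.
have ha : expR (2 * a) <= expR (8 * Bd beta * C%:R).
  rewrite ler_expR /a.
  have : 0 <= Bd beta * (4 * C%:R - N%:R ^+ 2) by apply: mulr_ge0; rewrite // subr_ge0.
  lra.
have -> : (n%:R * (eps / N%:R) ^+ 2)^-1 = N%:R ^+ 2 / (n%:R * eps ^+ 2).
  by field; rewrite !gt_eqF.
have en : 0 < n%:R * eps ^+ 2 by rewrite mulr_gt0 // exprn_gt0.
rewrite [X in X <= _](_ : _ = (S%:R * S%:R * N%:R ^+ 2 * expR (2 * a)) / (n%:R * eps ^+ 2)); last by ring.
rewrite ler_pM2r ?invr_gt0 //.
have -> : (6 + 8 * Bd beta) * C%:R = C%:R + C%:R + 4 * C%:R + 8 * Bd beta * C%:R by ring.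
rewrite !expRD.
have S0 : (0 : R) <= S%:R by exact: ler0n.
apply: ler_pM; rewrite ?expR_ge0 ?exprn_ge0 ?ler0n ?mulr_ge0 //.
apply: ler_pM; rewrite ?expR_ge0 ?exprn_ge0 ?ler0n ?mulr_ge0 //.
by apply: ler_pM; rewrite ?expR_ge0 ?exprn_ge0 ?ler0n ?mulr_ge0.
Qed.

Local Open Scope classical_set_scope.
Local Open Scope ring_scope.

Theorem mainTheorem16 (R : realType) (K : nat) (v : 'I_K.+1 -> nat)
  (T : forall k : 'I_K.+1, sgraph (v k)) (beta : 'I_K.+1 -> R)
  (m : nat -> nat) :
  (* T_1 (index ord0) is a single edge *)
  v ord0 = 2%N -> #|edges (T ord0)| = 1%N ->
  (* T_2, ..., T_K have at least two edges *)
  (forall k : 'I_K.+1, k != ord0 -> (2 <= #|edges (T k)|)%N) ->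
  (* m_n -> oo *)
  (forall M : nat, \forall n \near \oo, (M <= m n)%N) ->
  (* binom(m_n, 2) = o(log n) *)
  ((fun n : nat => (('C(m n, 2))%:R / ln (n%:R : R) : R)) @ \oo --> 0) ->
  forall eps : R, 0 < eps ->
  ((fun n : nat =>
     (iidProb (ergmP T beta (N := m n)) (n := n)
       (fun s : {ffun 'I_n -> sgraph (m n)} =>
          [exists G : sgraph (m n),
             eps / (m n)%:R <
             `| n%:R^-1 * \sum_(i < n) ((s i == G)%:R / ergmP T beta G) - 1 |])
      : R)) @ \oo --> 0).
Proof.
move=> _ _ _ hm hC eps e0.
set c := 6 + 8 * Bd beta.
have c0 : 0 < c by rewrite /c; have := Bd_ge0 beta; lra.
apply/cvgrPdist_le => e ep.
have t0 : 0 < e * eps ^+ 2 by rewrite mulr_gt0 // exprn_gt0.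
have c2 : 0 < (2 * c)^-1 by rewrite invr_gt0; lra.
have hC' := proj1 (cvgrPdist_le _ _) hC _ c2.
near=> n.
have h2 : (2 <= m n)%N by near: n; exact: hm.
have hn2 : (2 <= n)%N by near: n; exact: nbhs_infty_ge.
have hnt : ((e * eps ^+ 2) ^+ 2)^-1 <= n%:R by near: n; exact: nbhs_infty_ger.
have hc : `|0 - 'C(m n, 2)%:R / ln (n%:R : R)| <= (2 * c)^-1 by near: n; exact: hC'.
rewrite sub0r normrN ger0_norm; last first.
  by apply: sumr_ge0 => s _; apply: prodr_ge0 => i _; exact: P_ge0.
apply: le_trans (@key R K.+1 v T beta n (m n) eps e0 h2 _) _; first by apply: leq_trans hn2.
set C := 'C(m n, 2)%:R.
have nR : 1 < (n%:R : R) by rewrite ltr1n.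
have ln0 : 0 < ln (n%:R : R) by apply: ln_gt0.
have hc2 : 2 * c * C <= ln (n%:R : R).
  move: hc; rewrite sub0r normrN ger0_norm; last first.
    by apply: divr_ge0; [exact: ler0n | exact: ltW].
  rewrite ler_pdivrMr // => h.
  have -> : ln (n%:R : R) = 2 * c * ((2 * c)^-1 * ln (n%:R : R)).
    by field; lra.
  by apply: ler_wpM2l => //; lra.
set y := expR (c * C).
have y0 : 0 <= y by exact: expR_ge0.
have hy : y ^+ 2 <= n%:R.
  rewrite /y -expRM_natl.
  rewrite -[X in _ <= X](@lnK R); last by rewrite posrE; lra.
  rewrite ler_expR; lra.
set t := e * eps ^+ 2.
have nt : 1 <= t ^+ 2 * n%:R.
  rewrite -ler_pdivrMl ?exprn_gt0 // mulr1 //.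
have yt : y <= t * n%:R.
  have tn0 : 0 <= t * n%:R by rewrite mulr_ge0 ?ler0n // ltW.
  have : y ^+ 2 <= (t * n%:R) ^+ 2.
    apply: le_trans hy _; rewrite exprMn.
    have : n%:R <= t ^+ 2 * n%:R * n%:R.
      rewrite -[X in X <= _]mul1r; apply: ler_wpM2r => //; lra.
    by rewrite mulrA.
  by rewrite ler_pXn2r ?nnegrE.
have en : 0 < n%:R * eps ^+ 2 by rewrite mulr_gt0 ?exprn_gt0 //; lra.
rewrite ler_pdivrMr //.
apply: le_trans yt _; rewrite /t; lra.
Unshelve. all: end_near.
Qed.
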